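(* Let $\mathcal V$ be a quaternionic Hermitian vector space of real dimension $4n$ with $n>1$, and let $\gamma_I,\gamma_J,\gamma_K\in\Lambda^2\mathcal V^*$ satisfy $$\gamma_I\wedge\omega_J=\gamma_J\wedge\omega_I,\qquad \gamma_J\wedge\omega_K=\gamma_K\wedge\omega_J,\qquad \gamma_K\wedge\omega_I=\gamma_I\wedge\omega_K .$$ Then $\langle\gamma_I,\omega_I\rangle=\langle\gamma_J,\omega_J\rangle=\langle\gamma_K,\omega_K\rangle$, and $\gamma_A=c\,\omega_A$ for $A=I,J,K$, where $2n\,c=\langle\gamma_I,\omega_I\rangle$.
   Context: $\mathcal V$ is a real $4n$-dimensional vector space with inner product $\langle\cdot,\cdot\rangle$ and endomorphisms $I,J,K$ with $I^2=J^2=-1$, $K=IJ=-JI$, $\langle Ax,Ay\rangle=\langle x,y\rangle$; $\omega_A(x,y)=\langle x,Ay\rangle$. The inner product on 2-forms is $\langle a,b\rangle=\tfrac12\sum_{i,j}a(e_i,e_j)b(e_i,e_j)$ for an orthonormal basis $\{e_i\}$; $\wedge$ is the exterior product of forms. *)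

(* Defs.v *)
From HB Require Import structures.
From mathcomp Require Import all_boot all_order all_algebra.
Set Implicit Arguments. Unset Strict Implicit. Unset Printing Implicit Defensive.
Import Order.TTheory GRing.Theory Num.Theory.
Local Open Scope ring_scope.

(* The space V is modelled as column vectors 'cV[R]_N (N = 4n) with the
   standard Euclidean inner product (i.e. coordinates in an orthonormal basis
   e_i = delta_mx i 0). *)

Definition ip (R : pzRingType) (N : nat) (x y : 'cV[R]_N) : R :=
  \sum_(i < N) x i 0 * y i 0.

Definition evec (R : pzRingType) (N : nat) (i : 'I_N) : 'cV[R]_N := delta_mx i 0.

(* 2-forms are represented by their matrices a i j = a(e_i, e_j) *)
Definition skew_mx2 (R : pzRingType) (N : nat) (a : 'M[R]_N) : Prop := a^T = - a.

Definition omega (R : pzRingType) (N : nat) (A : 'M[R]_N) : 'M[R]_N :=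
  \matrix_(i, j) ip (evec R i) (A *m evec R j).

(* exterior product of two 2-forms, evaluated on basis quadruples
   (sum over (2,2)-shuffles with signs) *)
Definition wedge2 (R : pzRingType) (N : nat) (a b : 'M[R]_N)
    : 'I_N -> 'I_N -> 'I_N -> 'I_N -> R :=
  fun i j k l =>
    a i j * b k l - a i k * b j l + a i l * b j k
  + a j k * b i l - a j l * b i k + a k l * b i j.

Definition fdot (R : fieldType) (N : nat) (a b : 'M[R]_N) : R :=
  2^-1 * \sum_(i < N) \sum_(j < N) a i j * b i j.

Definition quat_herm (R : pzRingType) (N : nat) (I J K : 'M[R]_N) : Prop :=
  [/\ I *m I = - 1%:M, J *m J = - 1%:M, K = I *m J, K = - (J *m I)
    & forall A, A \in [:: I; J; K] ->
        forall x y : 'cV[R]_N, ip (A *m x) (A *m y) = ip x y].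

(* Main.v *)
Require Import Defs.
From HB Require Import structures.
From mathcomp Require Import all_boot all_order all_algebra.
Import Order.TTheory GRing.Theory Num.Theory.
Local Open Scope ring_scope.
Set Implicit Arguments. Unset Strict Implicit.

Section S.
Variable R : realFieldType.
Variable N : nat.
Implicit Types A B C P Q M a b m : 'M[R]_N.

Definition tt a b := \sum_(k < N) \sum_(l < N) a k l * b k l.

Lemma Adelta A j k : (A *m (delta_mx j 0 : 'cV_N)) k 0 = A k j.
Proof. by rewrite -colE mxE. Qed.

Lemma omegaE A : omega A = A.
Proof.
apply/matrixP=> i j; rewrite /omega /ip /evec mxE.
rewrite (bigD1 i) //= big1 ?addr0.
  by rewrite Adelta mxE !eqxx mul1r.
by move=> k /negPf ki; rewrite mxE ki mul0r.
Qed.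

Lemma orthoT A : (forall x y : 'cV[R]_N, ip (A *m x) (A *m y) = ip x y) ->
  A^T *m A = 1%:M.
Proof.
move=> h; apply/matrixP=> i j.
have := h (delta_mx i 0 : 'cV_N) (delta_mx j 0 : 'cV_N); rewrite /ip => e.
rewrite !mxE -[RHS](_ : \sum_(k < N) (delta_mx i 0 : 'cV_N) k 0 * (delta_mx j 0 : 'cV_N) k 0 = _).
  by rewrite -e; apply: eq_bigr => k _; rewrite !Adelta mxE.
rewrite (bigD1 i) //= big1 ?addr0.
  by rewrite !mxE !eqxx mul1r andbT.
by move=> k /negPf ki; rewrite mxE ki mul0r.
Qed.

Lemma skewE A : A^T = - A -> forall i j, A i j = - A j i.
Proof. by move=> h i j; have := congr1 (fun M => M j i) h; rewrite !mxE => ->. Qed.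

Lemma mm3 a m b i j : (a *m m *m b) i j = \sum_(k < N) \sum_(l < N) a i k * m k l * b l j.
Proof.
rewrite mxE exchange_big /=; apply: eq_bigr => l _; rewrite mxE mulr_suml.
by apply: eq_bigr.
Qed.

Lemma sum2D (F G : 'I_N -> 'I_N -> R) :
  \sum_(k < N) \sum_(l < N) (F k l + G k l) =
  \sum_(k < N) \sum_(l < N) F k l + \sum_(k < N) \sum_(l < N) G k l.
Proof. by rewrite -big_split; apply: eq_bigr => k _; rewrite big_split. Qed.

Lemma sum2B (F G : 'I_N -> 'I_N -> R) :
  \sum_(k < N) \sum_(l < N) (F k l - G k l) =
  \sum_(k < N) \sum_(l < N) F k l - \sum_(k < N) \sum_(l < N) G k l.
Proof.
rewrite -sumrB; apply: eq_bigr => k _; by rewrite sumrB.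
Qed.

Lemma contr a b m : a^T = - a -> b^T = - b -> m^T = - m -> forall i j,
  \sum_(k < N) \sum_(l < N) wedge2 a b i j k l * m k l =
  a i j * tt b m + b i j * tt a m + 2 * ((a *m m *m b) i j + (b *m m *m a) i j).
Proof.
move=> sa sb sm i j.
have ea := skewE sa; have eb := skewE sb; have em := skewE sm.
rewrite /wedge2.
under eq_bigr do under eq_bigr do rewrite !(mulrDl, mulrBl).
rewrite !(sum2D, sum2B).
have S1 : \sum_(k < N) \sum_(l < N) a i j * b k l * m k l = a i j * tt b m.
  rewrite /tt mulr_sumr; apply: eq_bigr => k _; rewrite mulr_sumr.
  by apply: eq_bigr => l _; rewrite mulrA.
have S2 : \sum_(k < N) \sum_(l < N) - (a i k * b j l) * m k l = (a *m m *m b) i j.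
  rewrite mm3; apply: eq_bigr => k _.
  by apply: eq_bigr => l _; rewrite (eb j l) !(mulrN, mulNr) opprK mulrAC.
have S3 : \sum_(k < N) \sum_(l < N) a i l * b j k * m k l = (a *m m *m b) i j.
  rewrite mm3 exchange_big; apply: eq_bigr => k _.
  by apply: eq_bigr => l _; rewrite (eb j l) (em l k) !(mulrN, mulNr) opprK mulrAC.
have S4 : \sum_(k < N) \sum_(l < N) a j k * b i l * m k l = (b *m m *m a) i j.
  rewrite mm3 exchange_big; apply: eq_bigr => k _.
  by apply: eq_bigr => l _; rewrite (ea j l) (em l k) !(mulrN, mulNr) opprK -mulrA [LHS]mulrC.
have S5 : \sum_(k < N) \sum_(l < N) - (a j l * b i k) * m k l = (b *m m *m a) i j.
  rewrite mm3; apply: eq_bigr => k _.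
  by apply: eq_bigr => l _; rewrite (ea j l) !(mulrN, mulNr) opprK -mulrA [LHS]mulrC.
have S6 : \sum_(k < N) \sum_(l < N) a k l * b i j * m k l = b i j * tt a m.
  rewrite /tt mulr_sumr; apply: eq_bigr => k _; rewrite mulr_sumr.
  by apply: eq_bigr => l _; rewrite mulrAC mulrC mulrA.
rewrite S1 S2 S3 S4 S5 S6.
rewrite mulrDl !mul1r.
set x := a i j * _; set y := b i j * _; set u := (a *m m *m b) i j; set v := (b *m m *m a) i j.
rewrite -!addrA; congr (_ + _).
by rewrite [y + _]addrC !addrA [u + v + u]addrAC.
Qed.

Lemma contrM P Q A B m : P^T = - P -> Q^T = - Q -> A^T = - A -> B^T = - B ->
  m^T = - m -> wedge2 P B = wedge2 Q A ->
  tt B m *: P + tt P m *: B + 2 *: (P *m m *m B + B *m m *m P) =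
  tt A m *: Q + tt Q m *: A + 2 *: (Q *m m *m A + A *m m *m Q).
Proof.
move=> sP sQ sA sB sm h; apply/matrixP=> i j.
have := contr sP sB sm i j; rewrite h (contr sQ sA sm) => e.
rewrite !mxE [tt B m * _]mulrC [tt A m * _]mulrC [tt P m * _]mulrC [tt Q m * _]mulrC.
by move: e; rewrite !mxE.
Qed.

Lemma tt_tr a b : tt a b = \tr (a *m b^T).
Proof.
rewrite /tt /mxtrace; apply: eq_bigr => k _; rewrite mxE.
by apply: eq_bigr => l _; rewrite mxE.
Qed.

Lemma tr_skew C : C^T = - C -> \tr C = 0.
Proof.
move=> h; have := mxtrace_tr C; rewrite h raddfN => e.
have : \tr C *+ 2 = 0 by rewrite mulr2n -{1}e addNr.
by move/eqP; rewrite -mulr_natr mulf_eq0 pnatr_eq0 orbF => /eqP.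
Qed.


Definition qtrip (A B C : 'M[R]_N) := [/\ A *m A = - 1%:M, B *m B = - 1%:M, C *m C = - 1%:M,
  [/\ A *m B = C, B *m A = - C, B *m C = A & C *m B = - A] &
  C *m A = B /\ A *m C = - B].

Lemma qtrip_rot A B C : qtrip A B C -> qtrip B C A.
Proof. by case=> h1 h2 h3 [h4 h5 h6 h7] [h8 h9]; split. Qed.

Lemma trN M : \tr (- M) = - \tr M.
Proof. by rewrite /mxtrace -sumrN; apply: eq_bigr => i _; rewrite mxE. Qed.

Lemma ttAA A : A^T = - A -> A *m A = - 1%:M -> tt A A = N%:R.
Proof. by move=> s h; rewrite tt_tr s mulmxN h opprK mxtrace1. Qed.

Lemma ttBA A B C : A^T = - A -> B^T = - B -> C^T = - C -> B *m A = - C -> A *m B = C ->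
  tt B A = 0 /\ tt A B = 0.
Proof.
move=> sA sB sC h1 h2; rewrite !tt_tr sA sB !mulmxN h1 h2 !trN opprK tr_skew //.
by rewrite oppr0.
Qed.

Lemma four M : 4 *: M = 2 *: (M + M).
Proof. by rewrite scalerDr -scalerDl -natrD. Qed.

Lemma EA P Q A B C : qtrip A B C -> P^T = - P -> Q^T = - Q -> A^T = - A -> B^T = - B ->
  C^T = - C -> wedge2 P B = wedge2 Q A ->
  (N%:R - 4) *: Q = (- tt Q A) *: A + tt P A *: B + 2 *: (P *m C - C *m P).
Proof.
move=> [hA hB hC [hAB hBA hBC hCB] [hCA hAC]] sP sQ sA sB sC h.
have e := contrM sP sQ sA sB sA h.
have [t1 t2] := ttBA sA sB sC hBA hAB.
rewrite t1 (ttAA sA hA) scale0r add0r -mulmxA hAB -!mulmxA hA !mulmxA hBA hA in e.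
rewrite !mulmxN !mulNmx !mulmx1 !mul1mx in e.
rewrite scalerBl four -addrA e scaleNr.
by rewrite -opprD scalerN addrA [- _ + _]addrC addrK.
Qed.

Lemma EB P Q A B C : qtrip A B C -> P^T = - P -> Q^T = - Q -> A^T = - A -> B^T = - B ->
  C^T = - C -> wedge2 P B = wedge2 Q A ->
  (N%:R - 4) *: P = tt Q B *: A + (- tt P B) *: B + 2 *: (C *m Q - Q *m C).
Proof.
move=> [hA hB hC [hAB hBA hBC hCB] [hCA hAC]] sP sQ sA sB sC h.
have e := contrM sP sQ sA sB sB h.
have [t1 t2] := ttBA sA sB sC hBA hAB.
rewrite t2 (ttAA sB hB) scale0r add0r -!mulmxA hB hBA !mulmxA hB hAB in e.
rewrite !mulmxN !mulNmx !mulmx1 !mul1mx in e.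
apply: (addIr (tt P B *: B)).
rewrite scaleNr [RHS]addrAC addrNK (addrC (C *m Q)) -e.
by rewrite scalerBl four -opprD scalerN [LHS]addrAC.
Qed.

Lemma anti (a u v w : R) P A B C M : qtrip A B C -> a != 0 ->
  a *: P = u *: A + v *: B + w *: (M *m C - C *m M) -> C *m P = - (P *m C).
Proof.
move=> [hA hB hC [hAB hBA hBC hCB] [hCA hAC]] a0 hP.
have hc : C *m (a *: P) *m C = a *: P.
  have e1 : C *m (M *m C) *m C = - (C *m M).
    by rewrite mulmxA -(mulmxA _ C C) hC mulmxN mulmx1.
  have e2 : C *m (C *m M) *m C = - (M *m C).
    by rewrite mulmxA hC !mulNmx mul1mx.
  rewrite hP !(mulmxDr, mulmxDl, mulmxBr, mulmxBl) -!scalemxAr -!scalemxAl.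
  rewrite mulmxBr mulmxBl e1 e2 hCA hBC hCB mulNmx hAC opprK.
  by rewrite opprK [- _ + _]addrC.
have hc' : C *m P *m C = P.
  apply/(scalerI a0); by rewrite scalemxAl scalemxAr.
by rewrite -{2}hc' -mulmxA hC mulmxN mulmx1 opprK.
Qed.

Lemma tt_anti Q A : A^T = - A -> A *m Q = - (Q *m A) -> tt Q A = 0.
Proof.
move=> sA h; rewrite tt_tr sA mulmxN trN.
have e : \tr (Q *m A) = - \tr (Q *m A) by rewrite -trN -h mxtrace_mulC.
have : \tr (Q *m A) *+ 2 = 0 by rewrite mulr2n {2}e addrN.
by move/eqP; rewrite -mulr_natr mulf_eq0 pnatr_eq0 orbF => /eqP ->; rewrite oppr0.
Qed.

Lemma cyc (a p q s : R) P Q S A B C : qtrip A B C ->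
  a *: Q = p *: B + 4 *: (P *m C) ->
  a *: S = q *: C + 4 *: (Q *m A) ->
  a *: P = s *: A + 4 *: (S *m B) ->
  a *: (a *: (a *: P)) = (a * (a * s) - a * (4 * q) + 4 * 4 * p) *: A - (4 * 4 * 4) *: P.
Proof.
move=> [hA hB hC [hAB hBA hBC hCB] [hCA hAC]] hQ hS hP.
have s1 : a *: (S *m B) = (- q) *: A + 4 *: (Q *m C).
  by rewrite scalemxAl hS mulmxDl -!scalemxAl hCB -mulmxA hAB scalerN scaleNr.
have s2 : a *: (Q *m C) = p *: A - 4 *: P.
  by rewrite scalemxAl hQ mulmxDl -!scalemxAl hBC -mulmxA hC mulmxN mulmx1 scalerN.
rewrite hP !scalerDr !scalerA (mulrAC a a 4) -(scalerA (a * 4) a) s1 scalerDr !scalerA -(mulrA a 4 4) (mulrC a (4 * 4)) -(scalerA (4 * 4) a) s2 scalerBr !scalerA.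
by rewrite !addrA -!scalerDl mulrN !mulrA.
Qed.

Lemma EA' P Q A B C : qtrip A B C -> P^T = - P -> Q^T = - Q -> A^T = - A -> B^T = - B ->
  C^T = - C -> wedge2 P B = wedge2 Q A -> tt Q A = 0 -> C *m P = - (P *m C) ->
  (N%:R - 4) *: Q = tt P A *: B + 4 *: (P *m C).
Proof.
move=> q sP sQ sA sB sC h t c; rewrite (EA q sP sQ sA sB sC h) t c oppr0 scale0r add0r.
by rewrite opprK four.
Qed.

Lemma anti' (a u v w : R) P A B C M : qtrip A B C -> a != 0 ->
  a *: P = u *: A + v *: B + w *: (C *m M - M *m C) -> C *m P = - (P *m C).
Proof.
move=> q a0 h; apply: (anti (u := u) (v := v) (w := - w) (M := M) q a0).
by rewrite h scaleNr -scalerN opprB.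
Qed.

Lemma solve (a c d : R) X A : a * (a * a) + d != 0 ->
  a *: (a *: (a *: X)) = c *: A - d *: X -> X = (c / (a * (a * a) + d)) *: A.
Proof.
move=> nz h.
rewrite !scalerA in h.
have e : (a * (a * a) + d) *: X = c *: A by rewrite scalerDl mulrA h subrK.
by rewrite -(scalerK nz X) e scalerA mulrC.
Qed.

Lemma ttZ k a b : tt (k *: a) b = k * tt a b.
Proof.
rewrite /tt mulr_sumr; apply: eq_bigr => i _; rewrite mulr_sumr.
by apply: eq_bigr => j _; rewrite mxE mulrA.
Qed.

Lemma cancelJ (i0 : 'I_N) (k k' : R) (J : 'M[R]_N) : J *m J = - 1%:M -> k *: J = k' *: J -> k = k'.
Proof.
move=> hJ e; have := congr1 (fun M => (M *m J) i0 i0) e.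
rewrite -!scalemxAl hJ !scalerN !mxE eqxx /= !mulr1.
by move/oppr_inj.
Qed.

Lemma skew_of A : A^T *m A = 1%:M -> A *m A = - 1%:M -> A^T = - A.
Proof.
move=> h hA; rewrite -[A^T]mulmx1 -[1%:M]opprK -hA mulmxN mulmxA h mul1mx.
done.
Qed.

Lemma quat_trip (I J K : 'M[R]_N) : I *m I = - 1%:M -> J *m J = - 1%:M ->
  K = I *m J -> K = - (J *m I) -> qtrip I J K.
Proof.
move=> hI hJ hK1 hK2.
have e : J *m I = - (I *m J) by rewrite -hK1 hK2 opprK.
subst K.
have IK : I *m (I *m J) = - J by rewrite mulmxA hI mulNmx mul1mx.
have KJ : I *m J *m J = - I by rewrite -mulmxA hJ mulmxN mulmx1.
have JK : J *m (I *m J) = I by rewrite mulmxA e mulNmx KJ opprK.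
have KI : I *m J *m I = J by rewrite -mulmxA e mulmxN IK opprK.
have KK : I *m J *m (I *m J) = - 1%:M by rewrite -mulmxA JK hI.
by split.
Qed.
Lemma rel (i0 : 'I_N) (a al be : R) A B C : qtrip A B C -> A^T = - A ->
  a = N%:R - 4 -> a != 0 ->
  a *: (be *: B) = tt (al *: A) A *: B + 4 *: ((al *: A) *m C) -> be = al.
Proof.
move=> [hA hB hC [hAB hBA hBC hCB] [hCA hAC]] sA ea a0 h.
rewrite ttZ (ttAA sA hA) -scalemxAl hAC !scalerN !scalerA -scaleNr -scalerDl in h.
have := cancelJ i0 hB h; rewrite [4 * al]mulrC -mulrN -mulrDr -ea [al * a]mulrC => /(mulfI a0).
done.
Qed.
End S.

Theorem lemma6p5 (R : realFieldType) (n : nat) (hn : (1 < n)%N)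
    (I J K gI gJ gK : 'M[R]_(4 * n))
    (hQ : quat_herm I J K)
    (hgI : skew_mx2 gI) (hgJ : skew_mx2 gJ) (hgK : skew_mx2 gK)
    (h1 : wedge2 gI (omega J) = wedge2 gJ (omega I))
    (h2 : wedge2 gJ (omega K) = wedge2 gK (omega J))
    (h3 : wedge2 gK (omega I) = wedge2 gI (omega K)) :
  let c := fdot gI (omega I) / (2 * n)%:R in
  fdot gI (omega I) = fdot gJ (omega J) /\
  fdot gJ (omega J) = fdot gK (omega K) /\
  gI = c *: omega I /\ gJ = c *: omega J /\ gK = c *: omega K.
Proof.
rewrite !omegaE in h1 h2 h3 *; rewrite /skew_mx2 in hgI hgJ hgK.
case: hQ => hI hJ hK1 hK2 hort.
have T1 := quat_trip hI hJ hK1 hK2.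
have T2 := qtrip_rot T1; have T3 := qtrip_rot T2.
have sk A : A \in [:: I; J; K] -> A *m A = - 1%:M -> A^T = - A.
  by move=> Ain; apply: skew_of; apply: orthoT; apply: hort.
have [_ _ hK _ _] := T1.
have sI : I^T = - I by apply: sk hI; rewrite !inE eqxx.
have sJ : J^T = - J by apply: sk hJ; rewrite !inE eqxx orbT.
have sK : K^T = - K by apply: sk hK; rewrite !inE eqxx !orbT.
set a : R := (4 * n)%:R - 4.
have apos : 0 < a.
  rewrite /a -natrB ?ltr0n; last by rewrite -{1}[4%N]muln1 leq_pmul2l // ltnW.
  by rewrite subn_gt0 -{1}[4%N]muln1 ltn_pmul2l.
have a0 : a != 0 by rewrite gt_eqF.
have KX := anti' T1 a0 (EB T1 hgI hgJ sI sJ sK h1).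
have KY := anti T1 a0 (EA T1 hgI hgJ sI sJ sK h1).
have IY := anti' T2 a0 (EB T2 hgJ hgK sJ sK sI h2).
have IZ := anti T2 a0 (EA T2 hgJ hgK sJ sK sI h2).
have JZ := anti' T3 a0 (EB T3 hgK hgI sK sI sJ h3).
have JX := anti T3 a0 (EA T3 hgK hgI sK sI sJ h3).
have E1 := EA' T1 hgI hgJ sI sJ sK h1 (tt_anti sI IY) KX.
have E2 := EA' T2 hgJ hgK sJ sK sI h2 (tt_anti sJ JZ) IY.
have E3 := EA' T3 hgK hgI sK sI sJ h3 (tt_anti sK KX) JZ.
have nz : a * (a * a) + 4 * 4 * 4 != 0.
  have a0' : 0 <= a by exact: ltW.
  rewrite gt_eqF // ltr_wpDl //; first by rewrite !mulr_ge0.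
  by rewrite !mulr_gt0.
have eX := solve nz (cyc T1 E1 E2 E3).
have eY := solve nz (cyc T2 E2 E3 E1).
have eZ := solve nz (cyc T3 E3 E1 E2).
have [al eX'] : exists al, gI = al *: I := ex_intro _ _ eX.
have [be eY'] : exists be, gJ = be *: J := ex_intro _ _ eY.
have [ga eZ'] : exists ga, gK = ga *: K := ex_intro _ _ eZ.
clear eX eY eZ.
have lt0 : (0 < 4 * n)%N by rewrite muln_gt0 /= ltnW.
pose i0 := Ordinal lt0.
rewrite eX' eY' in E1; rewrite eY' eZ' in E2.
have bea := rel i0 T1 sI erefl a0 E1.
have gab := rel i0 T2 sJ erefl a0 E2.
subst gI gJ gK be ga.
have F (A : 'M[R]_(4 * n)) : A^T = - A -> A *m A = - 1%:M ->
    fdot (al *: A) A = 2^-1 * (al * (4 * n)%:R).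
  by move=> s h; rewrite -(ttAA s h) -ttZ.
move=> c.
have ec : c = al.
  rewrite /c F // (_ : (4 * n = 2 * (2 * n))%N); last by rewrite mulnA.
  rewrite natrM mulrCA [2^-1 * _]mulrA mulVf ?mul1r ?mulfK //.
    by rewrite pnatr_eq0 muln_eq0 negb_or /= -lt0n ltnW.
  by rewrite pnatr_eq0.
by rewrite ec !F.
Qed.
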